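(* For every positive integer $t$ and every finite graph $G$ of degeneracy at most $t$, the hypergraph of closed neighborhoods in $G$ has a sample compression scheme of size $t+\lceil\log_2(t+1)\rceil+1$.
   Context: $G$ has degeneracy at most $t$ if there is a total order $\prec$ on $V(G)$ such that every vertex $v$ has at most $t$ neighbors $u$ with $u\prec v$. The hypergraph of closed neighborhoods in $G$ has vertex set $V(G)$ and hyperedges $B_G(c,1)=\{c\}\cup N_G(c)$ for $c\in V(G)$. For a hypergraph $H$ (finite $V(H)$, $E(H)\subseteq 2^{V(H)}$): a sample is a pair $(X^+,X^-)$ of subsets of $V(H)$ such that some hyperedge $e$ has $X^+\subseteq e$, $X^-\cap e=\emptyset$; $\mathcal{S}(H)$ is the set of samples; $S$ realizes $(X^+,X^-)$ if $X^+\subseteq S$, $S\cap X^-=\emptyset$; a subsample is a sample $(Y^+,Y^-)$ with $Y^\pm\subseteq X^\pm$, of size $|Y^+\cup Y^-|$. A sample compression scheme is $(\kappa,\rho)$ with $\kappa:\mathcal{S}(H)\to\mathcal{S}(H)\times\{0,1\}^*$ and $\rho:\mathcal{S}(H)\times\{0,1\}^*\to 2^{V(H)}$ such that for every sample the first component of $\kappa(X^+,X^-)$ is a subsample of it and $\rho(\kappa(X^+,X^-))$ realizes it; its size is $k_1+k_2$, $k_1$ the maximum subsample size and $k_2$ the maximum bitstring length output by $\kappa$. *)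

(* Defs.v *)
From mathcomp Require Import all_boot.
Set Implicit Arguments. Unset Strict Implicit. Unset Printing Implicit Defensive.

Definition simple_graph (T : finType) (e : rel T) : Prop :=
  symmetric e /\ irreflexive e.

Definition strict_total_order (T : finType) (lt : rel T) : Prop :=
  irreflexive lt /\ transitive lt /\ (forall u v, u != v -> lt u v || lt v u).

Definition degeneracy_le (T : finType) (e : rel T) (t : nat) : Prop :=
  exists lt : rel T, strict_total_order lt /\
    forall v : T, #|[set u | e u v & lt u v]| <= t.

Definition closed_nbhd (T : finType) (e : rel T) (c : T) : {set T} :=
  c |: [set u | e c u].

Definition closed_nbhd_hypergraph (T : finType) (e : rel T) : {set {set T}} :=
  [set closed_nbhd e c | c : T].

(* A hypergraph with vertex set T is given by its hyperedge set E. *)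
Definition is_sample (T : finType) (E : {set {set T}}) (X : {set T} * {set T}) : bool :=
  [exists S in E, (X.1 \subset S) && [disjoint X.2 & S]].

Definition realizes (T : finType) (S : {set T}) (X : {set T} * {set T}) : bool :=
  (X.1 \subset S) && [disjoint S & X.2].

Definition is_subsample (T : finType) (E : {set {set T}}) (Y X : {set T} * {set T}) : bool :=
  [&& is_sample E Y, Y.1 \subset X.1 & Y.2 \subset X.2].

Definition sample_size (T : finType) (Y : {set T} * {set T}) : nat := #|Y.1 :|: Y.2|.

(* compression and reconstruction maps (defined on all pairs; only their
   behaviour on samples matters) *)
Definition compressor (T : finType) := {set T} * {set T} -> ({set T} * {set T}) * seq bool.
Definition reconstructor (T : finType) := ({set T} * {set T}) * seq bool -> {set T}.

Definition is_compression_scheme (T : finType) (E : {set {set T}})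
    (kappa : compressor T) (rho : reconstructor T) : Prop :=
  forall X, is_sample E X ->
    is_subsample E (kappa X).1 X /\ realizes (rho (kappa X)) X.

Definition scheme_size (T : finType) (E : {set {set T}}) (kappa : compressor T) : nat :=
  (\max_(X | is_sample E X) sample_size (kappa X).1) +
  (\max_(X | is_sample E X) size (kappa X).2).

(* Main.v *)
Require Import Defs.
From mathcomp Require Import all_boot.
Set Implicit Arguments. Unset Strict Implicit. Unset Printing Implicit Defensive.

Fixpoint enc (L i : nat) : seq bool :=
  if L is L'.+1 then odd i :: enc L' i./2 else [::].

Fixpoint dec (bs : seq bool) : nat :=
  if bs is b :: bs' then b + (dec bs').*2 else 0.

Lemma size_enc L i : size (enc L i) = L.
Proof. by elim: L i => [|L IH] i //=; rewrite IH. Qed.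

Lemma dec_enc L i : i < 2 ^ L -> dec (enc L i) = i.
Proof.
elim: L i => [|L IH] i /=; first by rewrite expn0; case: i.
move=> hi; rewrite IH ?odd_double_half //.
rewrite -(ltn_pmul2l (isT : 0 < 2)) -expnS; apply: leq_ltn_trans hi.
by rewrite {2}(esym (odd_double_half i)) -muln2 mulnC leq_addl.
Qed.

Definition earlier (T : finType) (e lt : rel T) (v : T) : {set T} :=
  [set u | e u v & lt u v].
Definition cand (T : finType) (e lt : rel T) (v : T) : seq T :=
  v :: enum (earlier e lt v).
Definition center (T : finType) (e : rel T) (X : {set T} * {set T}) :=
  [pick c | (X.1 \subset closed_nbhd e c) && [disjoint X.2 & closed_nbhd e c]].

Definition kap (T : finType) (e lt : rel T) (L : nat) : compressor T := fun X =>
  match center e X with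
  | None => ((set0, set0), [::])
  | Some c => match [pick m in X.1 | m \notin earlier e lt c] with
     | None => ((X.1, set0), [:: false])
     | Some m => (([set m], set0), true :: enc L (index c (cand e lt m)))
     end end.

Definition rh (T : finType) (e lt : rel T) : reconstructor T := fun Yb =>
  match Yb.2 with
  | [::] => set0
  | false :: _ => Yb.1.1
  | true :: bs => match [pick m in Yb.1.1] with
      | None => set0
      | Some m => closed_nbhd e (nth m (cand e lt m) (dec bs)) end
  end.

Lemma pick_set1 (T : finType) (m : T) : [pick x in [set m]] = Some m.
Proof.
case: pickP => [x /set1P -> //| H]; by have := H m; rewrite set11.
Qed.

Theorem theorem1p5 (t : nat) (T : finType) (e : rel T) :
  0 < t -> simple_graph e -> degeneracy_le e t ->
  exists (kappa : compressor T) (rho : reconstructor T),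
    is_compression_scheme (closed_nbhd_hypergraph e) kappa rho /\
    scheme_size (closed_nbhd_hypergraph e) kappa <= t + up_log 2 t.+1 + 1.
Proof.
move=> t0 [esym eirr] [lt [[ltirr [lttr lttot]] deg]].
set L := up_log 2 t.+1.
have hL : t.+1 <= 2 ^ L by apply: up_logP.
have key : forall (X : {set T} * {set T}) c m, X.1 \subset closed_nbhd e c ->
    m \in X.1 -> m \notin earlier e lt c -> c \in cand e lt m.
  move=> X c m H1 mX mn; rewrite inE mem_enum.
  have := subsetP H1 _ mX; rewrite /closed_nbhd !inE.
  have [-> | mc] := eqVneq m c; first by [].
  move=> /= ecm.
  rewrite ecm /=; move: mn; rewrite inE esym ecm /= => nlt.
  have := lttot c m; rewrite eq_sym mc => /(_ isT); by rewrite (negbTE nlt) orbF.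
exists (kap e lt L), (rh e lt); split.
  move=> X HX; rewrite /kap /center.
  case: pickP => [c /andP[H1 H2] | Hn]; last first.
    move/existsP: HX => [S /andP[/imsetP[c _ ->] /andP[h1 h2]]].
    by have := Hn c; rewrite h1 h2.
  have sC : is_sample (closed_nbhd_hypergraph e) (X.1, set0).
    apply/existsP; exists (closed_nbhd e c); rewrite imset_f //= H1 /=.
    by rewrite -setI_eq0 set0I.
  case: pickP => [m /andP[mX mn] | Hm].
    split.
      rewrite /is_subsample /= sub1set mX sub0set !andbT.
      apply/existsP; exists (closed_nbhd e c); rewrite imset_f //= sub1set (subsetP H1 _ mX) /=.
      by rewrite -setI_eq0 set0I.
    have hi : index c (cand e lt m) < 2 ^ L.
      apply: (leq_trans _ hL); have := key X c m H1 mX mn; rewrite -index_mem => hs.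
      apply: (leq_trans hs); rewrite /cand /= ltnS -cardE; exact: deg.
    rewrite /rh /= pick_set1 dec_enc // nth_index ?(key X c m) //.
    by rewrite /realizes H1 disjoint_sym.
  split; first by rewrite /is_subsample sC subxx sub0set.
  by rewrite /rh /realizes /= subxx; apply: disjointWl H1 _; rewrite disjoint_sym.
rewrite /scheme_size -addnA addn1; apply: leq_add.
  apply/bigmax_leqP => X _; rewrite /kap /center.
  case: pickP => [c /andP[H1 H2] | Hn]; last by rewrite /sample_size /= setU0 cards0.
  case: pickP => [m /andP[mX mn] | Hm]; first by rewrite /sample_size /= setU0 cards1.
  rewrite /sample_size /= setU0; apply: leq_trans (deg c).
  apply: subset_leq_card; apply/subsetP => x xX.
  by have := Hm x; rewrite xX /= => /negbFE.
apply/bigmax_leqP => X _; rewrite /kap.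
case: (center e X) => [c|] //.
by case: pickP => [m _ | _] //=; rewrite size_enc.
Qed.
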